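(* Let $f:\mathbb{R}^N\to\mathbb{R}^N$ be $C^2$, equivariant with respect to a compact group $\Gamma\subseteq O(N)$, and let $x_\ast$ be a periodic solution of $\dot x=f(x)$ with minimal period $p>0$ which is a discrete wave with $H/K\cong\mathbb{Z}_n$. Fix a spatio-temporal symmetry $h\in H$ and $b\in\mathbb{R}$, and let $m\in\{1,\dots,n\}$ be such that $\theta_h=\frac{m}{n}p$. Let $U(t,s)$, $t\ge s$, be the family of solution operators of the linear DDE $$\dot y(t)=f'(x_\ast(t))y(t)+b\,[y(t)-h\,y(t-\theta_h)],$$ and let $U_h=h^{-1}U(\tfrac{m}{n}p,0)$ be the twisted monodromy operator. Then $$U(p,0)^m=h^nU_h^n.$$
   Context: $\Gamma$-equivariance means $f(\gamma x)=\gamma f(x)$ for all $x\in\mathbb{R}^N$, $\gamma\in\Gamma$. $K=\{\gamma\in\Gamma\mid\gamma x_\ast(0)=x_\ast(0)\}$, $H=\{\gamma\in\Gamma\mid\gamma\mathcal{O}=\mathcal{O}\}$ with $\mathcal{O}$ the orbit of $x_\ast$; for $h\in H$, $\theta_h\in[0,p)$ is defined by $hx_\ast(t)=x_\ast(t+\theta_h)$. $U(t,s)$ acts on $C([-\theta_h,0],\mathbb{R}^N)$, mapping an initial history $\varphi$ at time $s$ (i.e. $y(s+\vartheta)=\varphi(\vartheta)$, $\vartheta\in[-\theta_h,0]$) to the history segment $y_t(\vartheta)=y(t+\vartheta)$ of the solution. Matrices act on this function space pointwise. *)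

(* Defs.v *)
From HB Require Import structures.
From mathcomp Require Import all_boot all_order all_algebra.
From mathcomp Require Import all_classical all_reals all_analysis.
Set Implicit Arguments. Unset Strict Implicit. Unset Printing Implicit Defensive.
Import Order.TTheory GRing.Theory Num.Theory.
Import numFieldNormedType.Exports.
Local Open Scope classical_set_scope.
Local Open Scope ring_scope.

Section Defs.
Variables (R : realType) (N : nat).
Notation vec := 'cV[R]_N.
Notation mat := 'M[R]_N.

Definition C2 (f : vec -> vec) : Prop :=
  (forall x, differentiable f x) /\
  (forall v x, differentiable ('D_v f) x) /\
  (forall u v, continuous ('D_u ('D_v f))).

Definition compact_subgroup_ON (Gamma : set mat) : Prop :=
  [/\ forall g, Gamma g -> g^T *m g = 1%:M,
      Gamma 1%:M,
      forall g h, Gamma g -> Gamma h -> Gamma (g *m h),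
      forall g, Gamma g -> Gamma (invmx g) &
      compact Gamma].

Definition equivariant (Gamma : set mat) (f : vec -> vec) : Prop :=
  forall g x, Gamma g -> f (g *m x) = g *m f x.

Definition periodic_solution (f : vec -> vec) (x : R -> vec) (p : R) : Prop :=
  [/\ 0 < p,
      forall t : R, is_derive t (1:R) x (f (x t)),
      forall t, x (t + p) = x t &
      forall q, 0 < q < p -> exists t, x (t + q) <> x t].

Definition Kgrp (Gamma : set mat) (x : R -> vec) : set mat :=
  [set g | Gamma g /\ g *m x 0 = x 0].
Definition Hgrp (Gamma : set mat) (x : R -> vec) : set mat :=
  [set g | Gamma g /\ (fun v => g *m v) @` (range x) = range x].

(* H/K is isomorphic to Z_n : there is a surjective homomorphism
   H -> Z/nZ (values in {0,..,n-1}) whose kernel is exactly K. *)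
Definition discrete_wave (Gamma : set mat) (x : R -> vec) (n : nat) : Prop :=
  (0 < n)%N /\
  exists phi : mat -> nat,
    [/\ forall g, Hgrp Gamma x g -> (phi g < n)%N,
        forall g h, Hgrp Gamma x g -> Hgrp Gamma x h ->
          phi (g *m h) = ((phi g + phi h) %% n)%N,
        forall k, (k < n)%N -> exists g, Hgrp Gamma x g /\ phi g = k &
        forall g, Hgrp Gamma x g -> (phi g = 0%N <-> Kgrp Gamma x g)].

Definition is_theta (x : R -> vec) (p : R) (h : mat) (th : R) : Prop :=
  0 <= th < p /\ forall t, h *m x t = x (t + th).

Definition dde_solution (f : vec -> vec) (x : R -> vec) (b : R) (h : mat)
    (th s : R) (phi : R -> vec) (y : R -> vec) : Prop :=
  [/\ {within `[s - th, +oo[, continuous y},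
      forall v, - th <= v <= 0 -> y (s + v) = phi v &
      forall t : R, s < t ->
        is_derive t (1:R) y ('d f (x t) (y t) + b *: (y t - h *m y (t - th)))].

(* U is the family of solution operators U(t,s), t >= s, acting on
   C([-th,0], R^N); functions R -> vec are identified with their
   restriction to [-th,0]. *)
Definition solution_operators (f : vec -> vec) (x : R -> vec) (b : R)
    (h : mat) (th : R) (U : R -> R -> (R -> vec) -> (R -> vec)) : Prop :=
  forall t s (phi : R -> vec), s <= t ->
    {within `[- th, 0], continuous phi} ->
    exists y, dde_solution f x b h th s phi y /\
      forall v, - th <= v <= 0 -> U t s phi v = y (t + v).

End Defs.

(* Main.v *)
Require Import Defs.
From HB Require Import structures.
From mathcomp Require Import all_boot all_order all_algebra.
From mathcomp Require Import all_classical all_reals all_analysis.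
From mathcomp Require Import lra.
Set Implicit Arguments. Unset Strict Implicit. Unset Printing Implicit Defensive.
Import Order.TTheory GRing.Theory Num.Theory.
Import numFieldNormedType.Exports.
Local Open Scope classical_set_scope.
Local Open Scope ring_scope.
Lemma norm_entry {R : realType} m n (M : 'M[R]_(m,n)) i j : `|M i j| <= `|M|.
Proof.
rewrite [leRHS]/Num.Def.normr/= mx_normrE.
exact: (le_bigmax _ _ (i, j)).
Qed.

Lemma norm_le_entries {R : realType} m n (M : 'M[R]_(m,n)) c : 0 <= c ->
  (forall i j, `|M i j| <= c) -> `|M| <= c.
Proof.
move=> c0 H; rewrite [leLHS]/Num.Def.normr/= mx_normrE.
by apply: bigmax_le => // -[i j] _; apply: H.
Qed.

Lemma norm_mulmx {R : realType} m n p (A : 'M[R]_(m,n)) (B : 'M[R]_(n,p)) :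
  `|A *m B| <= n%:R * `|A| * `|B|.
Proof.
apply: norm_le_entries; first by rewrite mulr_ge0 // mulr_ge0.
move=> i j; rewrite mxE.
apply: le_trans (ler_norm_sum _ _ _) _.
apply: le_trans (_ : \sum_(k < n) `|A| * `|B| <= _).
  apply: ler_sum => k _; rewrite normrM.
  by apply: ler_pM => //; apply: norm_entry.
by rewrite sumr_const card_ord -mulrA mulr_natl.
Qed.

Lemma lipschitz_cont {R : realType} (V W : normedModType R) (f : V -> W) k :
  (forall a b, `|f a - f b| <= k * `|a - b|) -> continuous f.
Proof.
move=> H x; apply/cvgrPdist_lt => e e0.
have k1 : 0 < `|k| + 1 by rewrite ltr_pwDr // normr_ge0.
apply/nbhs_ballP; exists (e / (`|k| + 1)); first by rewrite /= divr_gt0.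
move=> y /=; rewrite -ball_normE /ball_ /= => xy.
apply: le_lt_trans (H x y) _.
apply: le_lt_trans (_ : (`|k| + 1) * `|x - y| < _).
  apply: ler_wpM2r => //; apply: le_trans (ler_norm k) _; by rewrite lerDl.
by move: xy; rewrite ltr_pdivlMr // mulrC.
Qed.

Lemma mulmx_cont {R : realType} m n p (A : 'M[R]_(m,n)) :
  continuous (fun B : 'M[R]_(n,p) => A *m B).
Proof.
apply: (@lipschitz_cont _ _ _ _ (n%:R * `|A|)) => a b.
by rewrite -mulmxBr norm_mulmx.
Qed.

Lemma entry_cont {R : realType} m n i j :
  continuous (fun B : 'M[R]_(m,n) => B i j).
Proof.
apply: (@lipschitz_cont _ _ _ _ 1) => a b.
by rewrite mul1r; have := norm_entry (a - b) i j; rewrite !mxE.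
Qed.

Lemma withinP {R : realType} (V : normedModType R) (A : set R) (f : R -> V) :
 {within A, continuous f} <-> forall x, A x -> forall e, 0 < e ->
   exists2 d, 0 < d & forall u, A u -> `|x - u| < d -> `|f x - f u| < e.
Proof.
rewrite subspace_continuousP; split.
  move=> H x Ax e e0.
  have := (cvgrPdist_lt _ _).1 (H x Ax) e e0.
  rewrite near_withinE => /(_ (within_filter _ _)) /nbhs_ballP [d /= d0 Hd].
  exists d => // u Au xu; apply: Hd => //.
move=> H x Ax; apply/cvgrPdist_lt => e e0; rewrite near_withinE.
apply/nbhs_ballP; have [d d0 Hd] := H x Ax e e0.
exists d => // u; rewrite -ball_normE /= => xu Au; exact: Hd.
Qed.

Lemma within_comp {R : realType} (V W : normedModType R) (A : set R)
  (f : R -> V) (g : V -> W) :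
  {within A, continuous f} -> continuous g -> {within A, continuous (g \o f)}.
Proof. by move=> cf cg x; exact: (@continuous_comp (subspace A) _ _ f g x (cf x) (cg _)). Qed.

Lemma within_shift {R : realType} (V : normedModType R) (A : set R)
  (f : R -> V) tau :
  {within A, continuous f} ->
  {within [set t | A (t + tau)], continuous (fun t => f (t + tau))}.
Proof.
move=> /withinP H; apply/withinP => x Ax e e0.
have [d d0 Hd] := H _ Ax e e0.
exists d => // u Au xu; apply: Hd => //.
by rewrite opprD addrACA subrr addr0.
Qed.

Lemma comp_derive {R : realType} m n (z : R -> 'M[R]_(m,n)) (x : R) dz i j :
  is_derive x 1 z dz -> is_derive x 1 (fun u => z u i j) (dz i j).
Proof.
move=> [dz1 <-]; split; first exact: (derivable_mxP _ _ _).1 dz1 i j.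
by rewrite derive_mx // mxE.
Qed.

Lemma is_derive_transform {R : realType} m n p (y : R -> 'M[R]_(n,p))
  (g : 'M[R]_(m,n)) (tau t : R) dy :
  is_derive (t + tau) 1 y dy ->
  is_derive t 1 (fun u => g *m y (u + tau)) (g *m dy).
Proof.
move=> [dy1 <-].
have H : (fun h : R => h^-1 *: (g *m y (h *: 1 + t + tau) - g *m y (t + tau)))
   = (fun B => g *m B) \o
     (fun h : R => h^-1 *: (y (h *: 1 + (t + tau)) - y (t + tau))).
  by apply: funext => h /=; rewrite -mulmxBr -scalemxAr addrA.
have C : (fun h : R => h^-1 *: (g *m y (h *: 1 + t + tau) - g *m y (t + tau)))
   @ 0^' --> g *m 'D_1 y (t + tau).
  rewrite H; apply: continuous_cvg; first exact: mulmx_cont.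
  exact: dy1.
split; first by apply/cvg_ex; eexists; exact: C.
exact: cvg_lim C.
Qed.

Lemma dde_uniq {R : realType} {N : nat} (A : R -> 'cV[R]_N -> 'cV[R]_N)
  (b : R) (h : 'M[R]_N) (th s : R) (z : R -> 'cV[R]_N) :
  0 < th ->
  (forall t0 : R, exists2 C, 0 <= C &
     \forall u \near t0, forall w, `|A u w| <= C * `|w|) ->
  {within `[s - th, +oo[, continuous z} ->
  (forall u, s - th <= u <= s -> z u = 0) ->
  (forall t, s < t ->
     is_derive t 1 z (A t (z t) + b *: (z t - h *m z (t - th)))) ->
  forall t, s - th <= t -> z t = 0.
Proof.
move=> th0 Abnd zc z0 zd t1 t1s.
have [//|nz] := eqVneq (z t1) 0.
exfalso.
pose S := [set t | s <= t /\ forall u, s - th <= u <= t -> z u = 0].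
have Ss : S s by split => //.
have Sub : forall t, S t -> t <= t1.
  move=> t [_ Ht]; rewrite leNgt; apply/negP => tt1.
  by move: nz; rewrite Ht ?eqxx // t1s ltW.
have hs : has_sup S by split; [exists s | exists t1 => t /Sub].
set t0 := sup S.
have t0s : s <= t0 := sup_upper_bound hs Ss.
have zlt : forall u, s - th <= u -> u < t0 -> z u = 0.
  move=> u u1 u2.
  have tu : 0 < t0 - u by rewrite subr_gt0.
  have [e [_ He] ue] := sup_adherent tu hs.
  apply: He; rewrite u1 /=; apply: ltW.
  by move: ue; rewrite opprB addrCA subrr addr0.
have [C C0 /nbhs_ballP [eps /= eps0 Heps]] := Abnd t0.
pose K := C + `|b| + 1.
have K0 : 0 < K by rewrite /K ltr_wpDl // addr_ge0.
pose d := Num.min th (Num.min (eps / 2) (1 / (2 * K))).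
have d0 : 0 < d by rewrite /d !lt_min th0 !divr_gt0 // mulr_gt0.
have dth : d <= th by rewrite /d ge_min lexx.
have deps : d <= eps / 2 by rewrite /d !ge_min lexx orbT.
have dK : d <= 1 / (2 * K) by rewrite /d !ge_min lexx !orbT.
have Kd : K * d <= 1 / 2.
  have := ler_wpM2l (ltW K0) dK.
  by rewrite mul1r invfM mulrCA mulfV ?gt_eqF // mulr1 mul1r.
pose a := Num.max s (t0 - d / 2).
have as_ : s <= a by rewrite /a le_max lexx.
have at0 : a <= t0 by rewrite /a ge_max t0s /= lerBlDr lerDl divr_ge0 // ltW.
have ta : t0 - d / 2 <= a by rewrite /a le_max lexx orbT.
have za : forall u, s - th <= u <= a -> z u = 0.
  move=> u /andP[u1 u2]; case: (leP u s) => us.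
    by apply: z0; rewrite u1 us.
  apply: zlt => //; move: u2; rewrite /a le_max leNgt us /= => u2.
  apply: le_lt_trans u2 _; rewrite ltrBlDr ltrDl divr_gt0 //.
have ad : t0 < a + d by lra.
have bnd : forall u, a <= u <= a + d -> forall w, `|A u w| <= C * `|w|.
  move=> u /andP[u1 u2] w; apply: Heps; rewrite -ball_normE /=.
  rewrite ltr_distlC; apply/andP; split; lra.
have zcab : {within `[a, a + d], continuous z}.
  apply: continuous_subspaceW zc => u /=; rewrite !in_itv /= andbT.
  move=> /andP[u1 _]; lra.
have [c cin cmax] := EVT_max (f := fun u => `|z u|) (ltW (ltr_pwDr d0 (lexx a)))
  (within_comp zcab (@norm_continuous _ _)).
set M := `|z c|.
have M0 : 0 <= M by rewrite /M normr_ge0.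
move: cin; rewrite in_itv /= => /andP[c1 c2].
have key : M <= M / 2.
  apply: norm_le_entries; first by rewrite divr_ge0.
  move=> i j.
  pose df := fun u => (A u (z u) + b *: (z u - h *m z (u - th))) i j.
  have dz : forall x, x \in `]a, c[ -> is_derive x 1 (fun u => z u i j) (df x).
    move=> x; rewrite in_itv /= => /andP[x1 _].
    exact: comp_derive (zd x (le_lt_trans as_ x1)).
  have sub : `[a, c] `<=` `[a, a + d].
    move=> u /=; rewrite !in_itv /= => /andP[u1 u2]; apply/andP; split; lra.
  have [xi xin Hxi] := MVT_segment (f := fun u => z u i j) (df := df) c1 dz
    (within_comp (continuous_subspaceW sub zcab) (@entry_cont _ _ _ i j)).
  move: xin; rewrite in_itv /= => /andP[x1 x2].
  rewrite (za a) ?lexx ?andbT in Hxi; last lra.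
  rewrite mxE subr0 in Hxi; rewrite Hxi normrM.
  have zx : z (xi - th) = 0 by apply: za; apply/andP; split; lra.
  have h1 : `|df xi| <= (C + `|b|) * M.
    rewrite /df zx mulmx0 subr0.
    apply: le_trans (norm_entry _ _ _) _.
    apply: le_trans (ler_normD _ _) _.
    rewrite normrZ mulrDl; apply: lerD.
      apply: le_trans (bnd xi _ (z xi)) _; first by apply/andP; split; lra.
      by apply: ler_wpM2l => //; apply: cmax; rewrite in_itv /=; apply/andP; split; lra.
    by apply: ler_wpM2l => //; apply: cmax; rewrite in_itv /=; apply/andP; split; lra.
  have h2 : `|c - a| <= d by rewrite ger0_norm; lra.
  apply: le_trans (ler_pM (normr_ge0 _) (normr_ge0 _) h1 h2) _.
  have : (C + `|b|) * d <= 1 / 2.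
    apply: le_trans Kd; apply: ler_wpM2r; [exact: ltW | rewrite /K lerDl //].
  move=> H; rewrite mulrAC; apply: le_trans (ler_wpM2r M0 H) _; lra.
have Mz : M = 0 by lra.
have Sad : S (a + d).
  split; first lra.
  move=> u /andP[u1 u2]; case: (leP u a) => ua.
    by apply: za; rewrite u1 ua.
  apply/eqP; rewrite -normr_eq0 eq_le normr_ge0 andbT -Mz; apply: cmax.
  rewrite in_itv /=; apply/andP; split; lra.
have := sup_upper_bound hs Sad; rewrite -/t0; lra.
Qed.


Lemma dbound {R : realType} {N : nat} (f : 'cV[R]_N -> 'cV[R]_N)
  (x : R -> 'cV[R]_N) :
  C2 f -> (forall t, is_derive t (1:R) x (f (x t))) ->
  forall t0 : R, exists2 C, 0 <= C &
    \forall u \near t0, forall w, `|'d f (x u) w| <= C * `|w|.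
Proof.
move=> [fd [Dd _]] xd t0.
have xc : continuous x.
  move=> t; apply: differentiable_continuous.
  by apply/derivable1_diffP; case: (xd t).
pose g i u := 'd f (x u) (delta_mx i (0 : 'I_1)).
have gc : forall i, {for t0, continuous (g i)}.
  move=> i; have -> : g i = ('D_(delta_mx i 0) f) \o x.
    by apply: funext => u; rewrite /g /= deriveE.
  apply: continuous_comp; first exact: xc.
  exact: differentiable_continuous (Dd _ _).
have ni : forall i, \forall u \near t0, `|g i u| <= `|g i t0| + 1.
  move=> i; near=> u.
  have Hu : `|g i t0 - g i u| < 1.
    by near: u; exact: ((cvgrPdist_lt _ _).1 (gc i) 1 ltr01).
  have -> : g i u = g i t0 - (g i t0 - g i u) by rewrite opprB addrC subrK.
  by apply: le_trans (ler_normB _ _) _; rewrite lerD // ltW.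
exists (\sum_i (`|g i t0| + 1)).
  by apply: sumr_ge0 => i _; rewrite addr_ge0.
near=> u => w.
have Hu : forall i, `|g i u| <= `|g i t0| + 1.
  by near: u; exact: filter_forall ni.
rewrite {1}(matrix_sum_delta w) linear_sum /=.
apply: le_trans (ler_norm_sum _ _ _) _.
rewrite mulr_suml; apply: ler_sum => i _.
rewrite big_ord1 linearZ /= normrZ mulrC.
apply: ler_pM => //; first exact: Hu.
exact: norm_entry.
Unshelve. all: by end_near.
Qed.

Lemma D_equiv {R : realType} {N : nat} (f : 'cV[R]_N -> 'cV[R]_N)
  (g : 'M[R]_N) (a w : 'cV[R]_N) :
  (forall v, f (g *m v) = g *m f v) -> (forall v, differentiable f v) ->
  'd f (g *m a) (g *m w) = g *m 'd f a w.
Proof.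
move=> feq fd.
have E1 : 'D_(g *m w) f (g *m a) = 'd f (g *m a) (g *m w) := deriveE _ (fd _).
have E2 : 'D_w f a = 'd f a w := deriveE _ (fd _).
apply: (etrans (esym E1)); apply: (etrans _ (congr1 _ E2)).
have D : derivable f a w := diff_derivable (fd a).
have E : (fun h : R => h^-1 *: (f (h *: (g *m w) + g *m a) - f (g *m a)))
  = (fun B => g *m B) \o (fun h : R => h^-1 *: (f (h *: w + a) - f a)).
  apply: funext => h /=.
  have -> : h *: (g *m w) + g *m a = g *m (h *: w + a) by rewrite mulmxDr scalemxAr.
  by rewrite !feq -mulmxBr scalemxAr.
rewrite /derive E; apply: cvg_lim => //.
apply: continuous_cvg; [exact: mulmx_cont | exact: D].
Qed.

Lemma hist_ext {R : realType} {N : nat} (f : 'cV[R]_N -> 'cV[R]_N) x b h th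
  s (phi1 phi2 : R -> 'cV[R]_N) y :
  dde_solution f x b h th s phi1 y ->
  (forall v, - th <= v <= 0 -> phi1 v = phi2 v) ->
  dde_solution f x b h th s phi2 y.
Proof.
move=> [c H d] E; split => // v vin; rewrite H // E //.
Qed.

Lemma restart {R : realType} {N : nat} (f : 'cV[R]_N -> 'cV[R]_N) x b h th
  s (phi : R -> 'cV[R]_N) y r :
  s <= r -> dde_solution f x b h th s phi y ->
  dde_solution f x b h th r (fun v => y (r + v)) y.
Proof.
move=> sr [c H d]; split => //.
- apply: continuous_subspaceW c => u /=; rewrite !in_itv /= !andbT.
  move=> ru; lra.
- move=> t rt; apply: d; lra.
Qed.

Lemma transform {R : realType} {N : nat} (f : 'cV[R]_N -> 'cV[R]_N) x b h th
  s (phi : R -> 'cV[R]_N) y (g : 'M[R]_N) (tau : R) :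
  (forall v, f (g *m v) = g *m f v) -> (forall v, differentiable f v) ->
  g *m h = h *m g -> (forall t, g *m x (t + tau) = x t) ->
  dde_solution f x b h th s phi y ->
  dde_solution f x b h th (s - tau) (fun v => g *m phi v)
    (fun t => g *m y (t + tau)).
Proof.
move=> feq fd gh gx [c H d]; split.
- have c2 := within_comp (within_shift (tau := tau) c) (@mulmx_cont R N N 1 g).
  apply: continuous_subspaceW c2 => u /=; rewrite !in_itv /= !andbT.
  move=> ru; lra.
- move=> v vin; rewrite -H //; congr (_ *m y _); lra.
- move=> t st.
  have st' : s < t + tau by lra.
  have D := is_derive_transform g (d _ st').
  have E : g *m ('d f (x (t + tau)) (y (t + tau)) +
            b *: (y (t + tau) - h *m y (t + tau - th))) =
    'd f (x t) (g *m y (t + tau)) +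
      b *: (g *m y (t + tau) - h *m (g *m y (t - th + tau))).
    rewrite mulmxDr; congr (_ + _).
      by rewrite -(gx t); exact: (esym (D_equiv _ _ feq fd)).
    rewrite -scalemxAr mulmxBr; congr (_ *: (_ - _)).
    rewrite !mulmxA gh; congr (_ *m y _); lra.
  rewrite E in D; exact: D.
Qed.

Lemma rearr {R : realType} (V : lmodType R) (b : R) (a1 a2 y1 y2 k1 k2 : V) :
  (a1 + b *: (y1 - k1)) - (a2 + b *: (y2 - k2)) =
  (a1 - a2) + b *: ((y1 - y2) - (k1 - k2)).
Proof. by rewrite opprD addrACA -scalerBr !opprD addrACA. Qed.

Lemma U_char {R : realType} {N : nat} (f : 'cV[R]_N -> 'cV[R]_N) x b h th U :
  0 < th -> C2 f -> (forall t, is_derive t (1:R) x (f (x t))) ->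
  solution_operators f x b h th U ->
  forall t s phi y, s <= t -> {within `[- th, 0], continuous phi} ->
  dde_solution f x b h th s phi y ->
  forall v, - th <= v <= 0 -> U t s phi v = y (t + v).
Proof.
move=> th0 fC2 xd HU t s phi y st phic [yc yh yd] v vin.
have [y' [[y'c y'h y'd] HUy]] := HU t s phi st phic.
rewrite HUy //.
have Z := dde_uniq (A := fun u => 'd f (x u)) (b := b) (h := h)
  (z := fun u => y' u - y u) th0 (dbound fC2 xd) (within_continuousB y'c yc).
apply/eqP; rewrite -subr_eq0; apply/eqP; apply: Z.
- move=> u /andP[u1 u2].
  have uin : - th <= u - s <= 0 by apply/andP; split; lra.
  have := y'h _ uin; have := yh _ uin.
  rewrite addrC subrK => -> ->; exact: subrr.
- move=> t1 st1.
  have D := is_deriveB (y'd t1 st1) (yd t1 st1).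
  rewrite rearr -linearB -mulmxBr in D.
  exact: D.
- move: vin => /andP[v1 v2]; lra.
Qed.

Lemma U_cont {R : realType} {N : nat} (f : 'cV[R]_N -> 'cV[R]_N) x b h th U :
  solution_operators f x b h th U ->
  forall t s phi, s <= t -> {within `[- th, 0], continuous phi} ->
  {within `[- th, 0], continuous (U t s phi)}.
Proof.
move=> HU t s phi st phic.
have [y [[yc _ _] HUy]] := HU t s phi st phic.
apply/withinP => v vin e e0.
move: vin; rewrite /= in_itv /= => /andP[v1 v2].
have tv : `[s - th, +oo[%classic (t + v).
  by rewrite /= in_itv /= andbT; lra.
move: yc => /withinP yc.
have [d d0 Hd] := yc (t + v) tv e e0.
exists d => // u; rewrite /= in_itv /= => /andP[u1 u2] vu.
rewrite !HUy ?v1 ?v2 ?u1 ?u2 //; apply: Hd.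
  by rewrite /= in_itv /= andbT; lra.
by rewrite opprD addrACA subrr add0r.
Qed.

Unset Implicit Arguments.

Theorem lemma3p2 (R : realType) (N : nat) (Gamma : set 'M[R]_N)
    (f : 'cV[R]_N -> 'cV[R]_N) (xstar : R -> 'cV[R]_N) (p : R) (n : nat)
    (h : 'M[R]_N) (b : R) (m : nat) (theta_h : R)
    (U : R -> R -> (R -> 'cV[R]_N) -> (R -> 'cV[R]_N)) :
  compact_subgroup_ON Gamma ->
  C2 f ->
  equivariant Gamma f ->
  periodic_solution f xstar p ->
  discrete_wave Gamma xstar n ->
  Hgrp Gamma xstar h ->
  is_theta xstar p h theta_h ->
  (1 <= m <= n)%N ->
  theta_h = m%:R / n%:R * p ->
  solution_operators f xstar b h theta_h U ->
  let Uh := fun phi : R -> 'cV[R]_N =>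
              (fun v => invmx h *m U (m%:R / n%:R * p) 0 phi v) in
  forall phi : R -> 'cV[R]_N, {within `[- theta_h, 0], continuous phi} ->
  forall v, - theta_h <= v <= 0 ->
    iter m (U p 0) phi v = (h ^+ n) *m (iter n Uh phi v).
Proof.
move=> [GO G1 GM GI Gc] fC2 feqv [p0 xd xp xmin] _ [Gh _] [thb hx] mn thE HU Uh
  phi phic v vin.
have fd : forall v, differentiable f v by case: fC2.
move: mn => /andP[m1 mn].
have n1 : (0 < n)%N by apply: leq_trans mn.
have n0 : n%:R != 0 :> R by rewrite pnatr_eq0 -lt0n.
have th0 : 0 < theta_h.
  by rewrite thE mulr_gt0 // divr_gt0 // ltr0n.
have th0' : 0 <= theta_h by apply: ltW.
have hU : h \in unitmx.
  by have [_] := mulmx1_unit (GO h Gh).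
have [Y [Ys _]] := HU 0 0 phi (lexx 0) phic.
have UhE : forall psi w, Uh psi w = invmx h *m U theta_h 0 psi w.
  by move=> psi w; rewrite /Uh thE.
have xpk : forall k t, xstar (t + k%:R * p) = xstar t.
  elim=> [|k IH] t; first by rewrite mul0r addr0.
  by rewrite mulrSr mulrDl mul1r addrA xp IH.
have CA : forall k, {within `[- theta_h, 0], continuous (iter k (U p 0) phi)} /\
    forall w, - theta_h <= w <= 0 -> iter k (U p 0) phi w = Y (k%:R * p + w).
  elim=> [|k [IHc IHe]].
    split => // w win; rewrite /= mul0r.
    by case: Ys => _ yh _; rewrite yh.
  have kp0 : 0 <= k%:R * p by rewrite mulr_ge0 // ltW.
  have S1 := restart kp0 Ys.
  have e1 : forall w, f (1%:M *m w) = 1%:M *m f w by move=> w; rewrite !mul1mx.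
  have e2 : 1%:M *m h = h *m 1%:M by rewrite mul1mx mulmx1.
  have e3 : forall t, 1%:M *m xstar (t + k%:R * p) = xstar t.
    by move=> t; rewrite mul1mx xpk.
  have S2 := transform e1 fd e2 e3 S1.
  rewrite subrr in S2.
  have sol : dde_solution f xstar b h theta_h 0 (iter k (U p 0) phi)
      (fun t => 1%:M *m Y (t + k%:R * p)).
    by apply: hist_ext S2 _ => w win; rewrite mul1mx IHe.
  split; first by rewrite iterS; apply: U_cont HU _ _ _ (ltW p0) IHc.
  move=> w win; rewrite iterS (U_char th0 fC2 xd HU (ltW p0) IHc sol win).
  by rewrite mul1mx mulrSr mulrDl mul1r; congr Y; lra.
have Gk : forall k, Gamma (invmx h ^+ k).
  elim=> [|k IH]; first exact: G1.
  by rewrite exprS -mulmxE; apply: GM => //; apply: GI.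
have comk : forall k, invmx h ^+ k *m h = h *m invmx h ^+ k.
  move=> k; rewrite !mulmxE; apply/esym/commrX.
  by rewrite /GRing.comm -!mulmxE mulmxV // mulVmx.
have xk : forall k t, invmx h ^+ k *m xstar (t + k%:R * theta_h) = xstar t.
  elim=> [|k IH] t; first by rewrite expr0 mul0r addr0 mul1mx.
  rewrite exprSr -mulmxE -mulmxA mulrSr mulrDl mul1r addrA -hx.
  by rewrite mulKmx.
have CB : forall k, {within `[- theta_h, 0], continuous (iter k Uh phi)} /\
    forall w, - theta_h <= w <= 0 ->
      iter k Uh phi w = invmx h ^+ k *m Y (k%:R * theta_h + w).
  elim=> [|k [IHc IHe]].
    split => // w win; rewrite /= mul0r expr0 mul1mx.
    by case: Ys => _ yh _; rewrite yh.
  have kp0 : 0 <= k%:R * theta_h by rewrite mulr_ge0.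
  have S1 := restart kp0 Ys.
  have e1 : forall w, f (invmx h ^+ k *m w) = invmx h ^+ k *m f w.
    by move=> w; apply: feqv.
  have S2 := transform e1 fd (comk k) (xk k) S1.
  rewrite subrr in S2.
  have sol : dde_solution f xstar b h theta_h 0 (iter k Uh phi)
      (fun t => invmx h ^+ k *m Y (t + k%:R * theta_h)).
    by apply: hist_ext S2 _ => w win; rewrite IHe.
  have Uc := U_cont HU th0' IHc.
  split.
    rewrite iterS.
    have -> : Uh (iter k Uh phi) =
      (fun B => invmx h *m B) \o U theta_h 0 (iter k Uh phi).
      by apply: funext => w; rewrite UhE.
    exact: (within_comp Uc (@mulmx_cont R N N 1 (invmx h))).
  move=> w win; rewrite iterS UhE (U_char th0 fC2 xd HU th0' IHc sol win).
  rewrite mulmxA mulmxE -exprS; congr (_ *m Y _).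
  by rewrite mulrSr mulrDl mul1r; lra.
have cancel : forall k (w : 'cV[R]_N), h ^+ k *m (invmx h ^+ k *m w) = w.
  elim=> [|k IH] w; first by rewrite !expr0 !mul1mx.
  rewrite exprSr exprS -!mulmxE -!mulmxA (mulmxA h) mulmxV // mul1mx.
  exact: IH.
rewrite (CA m).2 // (CB n).2 // cancel; congr Y.
by rewrite thE mulrA mulrCA mulfV // mulr1.
Qed.
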